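(* Let $p$ be a prime and let $f$ be one of the following automorphisms of $A=\mathbb{Z}_{p^2}\times\mathbb{Z}_p$ (writing elements as $(x,y)$ with $x\in\mathbb{Z}_{p^2}$, $y\in\mathbb{Z}_p$): $D(b,c):(x,y)\mapsto(bx,cy)$ with $0<b<p^2-1$, $b\not\equiv 0,1\pmod p$, $1<c<p$; $G(b):(x,y)\mapsto(bx,\,x+by)$ with $1<b<p$; $H(b,c):(x,y)\mapsto(bx+py,\,cx+by)$ with $0<b<p$, $0\le c<p-1$. Suppose $Q=\mathrm{Aff}(A,f)$ is connected. Then $Q$ is simply connected if and only if $f$ is one of: (i) $D(b,c)$ with $bc\not\equiv 1\pmod p$; (ii) $G(b)$ with $b\not\equiv -1\pmod p$; (iii) $H(b,c)$ with $b\not\equiv -1\pmod p$.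
   Context: A quandle is a set $Q$ with a binary operation $*$ such that every left translation $L_x:y\mapsto x*y$ is bijective, $x*(y*z)=(x*y)*(x*z)$ and $x*x=x$. For an abelian group $A$ and $f\in\mathrm{Aut}(A)$, $\mathrm{Aff}(A,f)$ is $A$ with $x*y=x+f(y-x)$. $Q$ is connected if $\langle L_x:x\in Q\rangle$ is transitive on $Q$. Every connected affine quandle over $\mathbb{Z}_{p^2}\times\mathbb{Z}_p$ is isomorphic to $\mathrm{Aff}(A,f)$ for $f$ in the list above. For a set $S$, a quandle cocycle with values in $\mathrm{Sym}_S$ is $\theta:Q\times Q\to\mathrm{Sym}_S$ with $\theta_{x*y,x*z}\theta_{x,z}=\theta_{x,y*z}\theta_{y,z}$ and $\theta_{x,x}=1$; it is cohomologous to the trivial cocycle if there is $\gamma:Q\to\mathrm{Sym}_S$ with $\theta_{x,y}=\gamma_{x*y}\gamma_y^{-1}$ for all $x,y$. $Q$ is simply connected if it is connected and, for every set $S$, every such cocycle is cohomologous to the trivial cocycle. *)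

(* Defs.v *)
From HB Require Import structures.
From mathcomp Require Import all_boot all_order all_algebra.
Set Implicit Arguments. Unset Strict Implicit. Unset Printing Implicit Defensive.
Import GRing.Theory.
Local Open Scope ring_scope.

Section QuandleDefs.
Variables (Q : Type) (op : Q -> Q -> Q).

Definition is_quandle : Prop :=
  [/\ forall x, bijective (op x),
      forall x y z, op x (op y z) = op (op x y) (op x z)
    & forall x, op x x = x].

(** Orbit of [x] under the group generated by the left translations
    [L_z : y |-> op z y] (words in the L_z and their inverses applied to x). *)
Inductive lt_orbit (x : Q) : Q -> Prop :=
| lt_orbit_refl : lt_orbit x x
| lt_orbit_fwd (y z : Q) : lt_orbit x y -> lt_orbit x (op z y)
| lt_orbit_bwd (y z : Q) : lt_orbit x (op z y) -> lt_orbit x y.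

Definition qconnected : Prop := forall x y, lt_orbit x y.

Definition quandle_cocycle (S : Type) (theta : Q -> Q -> S -> S) : Prop :=
  [/\ forall x y, bijective (theta x y),
      forall x y z s,
        theta (op x y) (op x z) (theta x z s) = theta x (op y z) (theta y z s)
    & forall x s, theta x x s = s].

Definition cohomologous_trivial (S : Type) (theta : Q -> Q -> S -> S) : Prop :=
  exists (gamma ginv : Q -> S -> S),
    (forall y, cancel (gamma y) (ginv y) /\ cancel (ginv y) (gamma y)) /\
    (forall x y s, theta x y s = gamma (op x y) (ginv y s)).

Definition simply_connected : Prop :=
  qconnected /\
  forall (S : Type) (theta : Q -> Q -> S -> S),
    quandle_cocycle theta -> cohomologous_trivial theta.

End QuandleDefs.

Definition aff_op (A : zmodType) (f : A -> A) (x y : A) : A := x + f (y - x).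

Definition Ap (p : nat) : zmodType := ('Z_(p ^ 2) * 'Z_p)%type.

Inductive aut_desc :=
| AutD of nat & nat
| AutG of nat
| AutH of nat & nat.

Definition valid_desc (p : nat) (d : aut_desc) : Prop :=
  match d with
  | AutD b c => [/\ (0 < b < p ^ 2 - 1)%N, (b %% p != 0)%N, (b %% p != 1)%N
                   & (1 < c < p)%N]
  | AutG b => (1 < b < p)%N
  | AutH b c => (0 < b < p)%N /\ (c < p - 1)%N
  end.

Definition red (p : nat) (x : 'Z_(p ^ 2)) : 'Z_p := (val x)%:R.
Definition pmul (p : nat) (y : 'Z_p) : 'Z_(p ^ 2) := (p * val y)%:R.

Definition desc_fun (p : nat) (d : aut_desc) : Ap p -> Ap p :=
  match d with
  | AutD b c => fun a => (b%:R * a.1, c%:R * a.2)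
  | AutG b => fun a => (b%:R * a.1, @red p a.1 + b%:R * a.2)
  | AutH b c => fun a => (b%:R * a.1 + @pmul p a.2, c%:R * @red p a.1 + b%:R * a.2)
  end.

Definition sc_condition (p : nat) (d : aut_desc) : Prop :=
  match d with
  | AutD b c => ((b * c) %% p != 1)%N
  | AutG b => ((b + 1) %% p != 0)%N
  | AutH b c => ((b + 1) %% p != 0)%N
  end.

(* Main.v *)
Require Import Defs.
From mathcomp Require Import all_boot all_order all_algebra.
From mathcomp Require Import ring zify.
From Stdlib Require Import IndefiniteDescription Classical.
Set Implicit Arguments. Unset Strict Implicit. Unset Printing Implicit Defensive.
Import GRing.Theory.
Local Open Scope ring_scope.

Section AffBasics.
Variables (A : comRingType) (f finv : A -> A).
Hypothesis fB : forall x y, f (x - y) = f x - f y.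
Hypothesis fK : cancel f finv.
Hypothesis finvK : cancel finv f.

Ltac aring := match goal with |- @eq _ ?a ?b => change (@eq (GRing.ComNzRing.sort A) a b); ring end.

Lemma af0 : f 0 = 0. Proof. by have := fB 0 0; rewrite !subrr. Qed.
Lemma afN x : f (- x) = - f x. Proof. by rewrite -sub0r fB af0 sub0r. Qed.
Lemma afD x y : f (x + y) = f x + f y.
Proof. by have := fB x (- y); rewrite opprK => ->; rewrite afN opprK. Qed.

Definition tau x := x - f x.

Lemma aff_dist x y z :
  aff_op f x (aff_op f y z) = aff_op f (aff_op f x y) (aff_op f x z).
Proof. rewrite /aff_op !(fB, afD, afN). ring. Qed.

Lemma aff0 a : aff_op f 0 a = f a.
Proof. by rewrite /aff_op add0r subr0. Qed.

Lemma tauD x y : tau (x + y) = tau x + tau y.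
Proof. rewrite /tau afD; ring. Qed.
Lemma tauB x y : tau (x - y) = tau x - tau y.
Proof. rewrite /tau fB; ring. Qed.
Lemma f_tau x : f (tau x) = tau (f x).
Proof. by rewrite /tau fB. Qed.

Lemma conn_tau : (forall x y, lt_orbit (aff_op f) x y) -> forall y, exists w, y = tau w.
Proof.
move=> qc y; elim: (qc 0 y) => [|y0 z _ [w ->]|y0 z _ [w Hw]].
- by exists 0; rewrite /tau af0 subrr.
- exists (z + f w); rewrite /aff_op /tau !(fB, afD, afN). aring.
- exists (finv (w - z)).
  have H1 : f y0 = tau (w - z).
    rewrite tauB -Hw /aff_op /tau fB; aring.
  apply: (can_inj fK); rewrite H1 f_tau finvK.
  done.
Qed.
End AffBasics.

Section NatStuff.
Local Open Scope nat_scope.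

Lemma iter_id (T : Type) (g : T -> T) n z : (forall z, g z = z) -> iter n g z = z.
Proof. by move=> Hg; elim: n => //= n ->. Qed.

Lemma iter_mul (T : Type) (g : T -> T) m n z : iter n (iter m g) z = iter (m * n) g z.
Proof.
elim: n => [|n IH]; first by rewrite muln0.
by rewrite iterS IH mulnS iterD.
Qed.

Lemma iter_kill (T : Type) (g gi : T -> T) (p n : nat) :
  cancel gi g -> prime p -> (forall z, iter p g z = z) ->
  (forall z, iter n g z = g z) -> (n %% p != 1)%N -> forall z, g z = z.
Proof.
move=> giK pp Hp Hn Hd.
have Hm z : iter (n %% p) g z = g z.
  by rewrite -Hn {2}(divn_eq n p) iterD (mulnC (n %/ p)%N) -iter_mul (iter_id _ _ Hp).
have ltmp : (n %% p < p)%N by rewrite ltn_pmod // prime_gt0.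
move: Hm Hd ltmp; case: (n %% p) => [|[|m1]] Hm Hd' ltmp.
- by move=> z; rewrite -Hm.
- by [].
have Hid w : iter m1.+1 g w = w.
  by have := Hm (gi w); rewrite iterSr !giK.
have cop : coprime m1.+1 p.
  rewrite coprime_sym prime_coprime //; apply/negP => /dvdn_leq => /(_ isT).
  by rewrite leqNgt (ltn_trans _ ltmp).
case: (egcdn m1.+1 p) / (egcdnP p (ltn0Sn m1)) => km kn Heq _.
move: Heq; rewrite (eqP cop) => Heq z.
have H1 : iter (km * m1.+1) g z = z by rewrite mulnC -iter_mul (iter_id _ _ Hid).
by rewrite -{2}H1 Heq iterD mulnC -iter_mul [in RHS]iter_id.
Qed.

End NatStuff.

Section Cov.
Variables (A : comRingType) (f finv tinv : A -> A).
Hypothesis fB : forall x y, f (x - y) = f x - f y.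
Hypothesis fK : cancel f finv.
Hypothesis finvK : cancel finv f.
Hypothesis tK : cancel (tau f) tinv.
Hypothesis tinvK : cancel tinv (tau f).
Variables (S : Type) (theta thinv : A -> A -> S -> S).
Hypothesis thK : forall x y, cancel (theta x y) (thinv x y).
Hypothesis thinvK : forall x y, cancel (thinv x y) (theta x y).
Hypothesis coc : forall x y z s,
  theta (aff_op f x y) (aff_op f x z) (theta x z s) = theta x (aff_op f y z) (theta y z s).
Hypothesis th0 : forall x s, theta x x s = s.

Ltac bring := match goal with |- @eq _ ?a ?b => change (@eq (GRing.ComNzRing.sort A) a b); ring end.

Definition E a (z : A * S) : A * S := (aff_op f a z.1, theta a z.1 z.2).
Definition Einv a (z : A * S) : A * S :=
  (a + finv (z.1 - a), thinv a (a + finv (z.1 - a)) z.2).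

Lemma EK a : cancel (E a) (Einv a).
Proof.
case=> q s; rewrite /E /Einv /=.
have -> : a + finv (aff_op f a q - a) = q.
  have -> : aff_op f a q - a = f (q - a) by rewrite /aff_op; bring.
  by rewrite fK; bring.
by rewrite thK.
Qed.

Lemma EinvK a : cancel (Einv a) (E a).
Proof.
case=> q s; rewrite /E /Einv /=.
have -> : aff_op f a (a + finv (q - a)) = q.
  rewrite /aff_op.
  have -> : a + finv (q - a) - a = finv (q - a) by bring.
  by rewrite finvK; bring.
by rewrite thinvK.
Qed.

Lemma Erel x y z : E x (E y z) = E (aff_op f x y) (E x z).
Proof. by case: z => q s; rewrite /E /= aff_dist // coc. Qed.

Definition E0 := E 0.
Definition E0inv := Einv 0.
Definition T x z := E x (E0inv z).
Definition Tinv x z := E0 (Einv x z).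

Lemma TK x : cancel (T x) (Tinv x).
Proof. by move=> z; rewrite /T /Tinv EK /E0 /E0inv EinvK. Qed.
Lemma TinvK x : cancel (Tinv x) (T x).
Proof. by move=> z; rewrite /T /Tinv /E0 /E0inv EK EinvK. Qed.

Lemma E0E a z : E0 (E a z) = E (f a) (E0 z).
Proof. by rewrite /E0 Erel aff0. Qed.
Lemma E0invE a z : E0inv (E (f a) z) = E a (E0inv z).
Proof. by rewrite -{1}[z](EinvK 0) -/E0inv -/E0 -E0E /E0 /E0inv EK. Qed.
Lemma E0invE' a z : E0inv (E a z) = E (finv a) (E0inv z).
Proof. by rewrite -E0invE finvK. Qed.
Lemma E0Einv a z : E0 (Einv a z) = Einv (f a) (E0 z).
Proof.
by rewrite -{2}[z](EinvK a) E0E EK.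
Qed.

Definition Central (g : A * S -> A * S) := forall a z, g (E a z) = E a (g z).

Lemma central_Einv g a z : Central g -> g (Einv a z) = Einv a (g z).
Proof. by move=> Hg; rewrite -{2}[z](EinvK a) Hg EK. Qed.
Lemma central_T g x z : Central g -> g (T x z) = T x (g z).
Proof. by move=> Hg; rewrite /T Hg /E0inv central_Einv. Qed.
Lemma central_Tinv g x z : Central g -> g (Tinv x z) = Tinv x (g z).
Proof. by move=> Hg; rewrite /Tinv /E0 Hg central_Einv. Qed.
Lemma central_inv g ginv : cancel g ginv -> cancel ginv g -> Central g -> Central ginv.
Proof. by move=> gK giK Hg a z; rewrite -{1}[z]giK -Hg gK. Qed.

Lemma equi_T x a z : T x (E a z) = E (a + tau f x) (T x z).
Proof.
rewrite /T E0invE' Erel; congr E; rewrite /aff_op fB finvK /tau; bring.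
Qed.
Lemma equi_Tinv x a z : Tinv x (E a z) = E (a - tau f x) (Tinv x z).
Proof.
apply: (can_inj (TK x)); rewrite TinvK equi_T TinvK subrK //.
Qed.

Definition C x y z := T x (T y (Tinv x (Tinv y z))).

Lemma C_central x y : Central (C x y).
Proof.
move=> a z; rewrite /C !equi_Tinv !equi_T; congr E; bring.
Qed.

Lemma central_C g x y z : Central g -> g (C x y z) = C x y (g z).
Proof. by move=> Hg; rewrite /C !(central_T _ _ Hg) !(central_Tinv _ _ Hg). Qed.

Definition K x y z := T x (T y (Tinv (x + y) z)).
Definition Kinv x y z := T (x + y) (Tinv y (Tinv x z)).
Lemma KK x y : cancel (K x y) (Kinv x y).
Proof. by move=> z; rewrite /K /Kinv !TK TinvK. Qed.
Lemma KinvK x y : cancel (Kinv x y) (K x y).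
Proof. by move=> z; rewrite /K /Kinv !TK !TinvK. Qed.
Lemma K_central x y : Central (K x y).
Proof.
move=> a z; rewrite /K (equi_Tinv (x + y)) (equi_T y) (equi_T x) (tauD fB); congr (E _ _); bring.
Qed.

Lemma CT y w u : T y (T w (Tinv y u)) = C y w (T w u).
Proof. by rewrite /C TK. Qed.

Lemma CCK x y : cancel (C x y) (C y x).
Proof. by move=> z; rewrite /C !TK !TinvK. Qed.

Lemma CD_l x y w z : C (x + y) w z = C y w (C x w z).
Proof.
have HT v : T (x + y) v = Kinv x y (T x (T y v)).
  by apply: (can_inj (KK x y)); rewrite KinvK /K TK.
have HTi v : Tinv (x + y) v = Tinv y (Tinv x (K x y v)).
  by rewrite /K !TK.
have Kc := K_central x y.
have Kic := central_inv (KK x y) (KinvK x y) Kc.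
rewrite [LHS]/C HT HTi (central_Tinv _ _ Kc) CT -(central_T x _ (C_central y w)).
rewrite -/(C x w (K x y z)) (central_C _ _ _ Kic) (central_C _ _ _ Kic) KK //.
Qed.

Lemma CD_r x y w z : C x (y + w) z = C x y (C x w z).
Proof.
rewrite -{1}[C x y (C x w z)](CCK (y + w) x) CD_l.
by rewrite CCK CCK.
Qed.

Lemma T0 z : T 0 z = z.
Proof. by rewrite /T /E0inv EinvK. Qed.
Lemma Tinv0 z : Tinv 0 z = z.
Proof. by rewrite /Tinv /E0 EinvK. Qed.

Lemma C0l y z : C 0 y z = z.
Proof. by rewrite /C T0 Tinv0 TinvK. Qed.
Lemma C0r x z : C x 0 z = z.
Proof. by rewrite /C T0 Tinv0 TinvK. Qed.
Lemma Cxx x z : C x x z = z.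
Proof. by rewrite /C !TinvK. Qed.

Lemma CMnl n x y z : C (x *+ n) y z = iter n (C x y) z.
Proof.
elim: n z => [|n IH] z; first by rewrite mulr0n C0l.
by rewrite mulrS CD_l IH iterSr.
Qed.
Lemma CMnr n x y z : C x (y *+ n) z = iter n (C x y) z.
Proof.
elim: n z => [|n IH] z; first by rewrite mulr0n C0r.
by rewrite mulrS CD_r IH iterS.
Qed.

Lemma E0T x z : E0 (T x z) = T (f x) (E0 z).
Proof. by rewrite /T E0E /E0 /E0inv EinvK EK. Qed.
Lemma E0Tinv x z : E0 (Tinv x z) = Tinv (f x) (E0 z).
Proof. by rewrite /Tinv E0Einv. Qed.

Lemma C_f x y z : C (f x) (f y) z = C x y z.
Proof.
have H w : C (f x) (f y) (E0 w) = C x y (E0 w).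
  rewrite /C -!E0Tinv -!E0T; exact: (esym (C_central x y 0 w)).
by rewrite -[z](EinvK 0) -/E0inv -/E0 H.
Qed.

Section KSec.
Variables (p : nat) (e1 e2 : A) (a1 a2 b1 b2 : nat).
Hypothesis pp : prime p.
Hypothesis decomp : forall x, exists n1 n2, x = e1 *+ n1 + e2 *+ n2.
Hypothesis pe2 : e2 *+ p = 0.
Hypothesis fe1 : f e1 = e1 *+ a1 + e2 *+ a2.
Hypothesis fe2 : f e2 = e1 *+ b1 + e2 *+ b2.
Hypothesis Hd : ((p.-1 * (a2 * b1) + a1 * b2) %% p != 1)%N.

Lemma kp z : iter p (C e1 e2) z = z.
Proof. by rewrite -CMnr pe2 C0r. Qed.

Lemma C21 z : C e2 e1 z = iter p.-1 (C e1 e2) z.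
Proof.
have H : C e1 e2 (iter p.-1 (C e1 e2) z) = z.
  by rewrite -iterS prednK ?prime_gt0 // kp.
by rewrite -{1}H CCK.
Qed.

Lemma Cmn (x y : A) m n z : C (x *+ m) (y *+ n) z = iter (m * n) (C x y) z.
Proof.
rewrite CMnr -iter_mul; apply: eq_iter => w; exact: CMnl.
Qed.

Lemma Cgen z : C (e1 *+ a1 + e2 *+ a2) (e1 *+ b1 + e2 *+ b2) z =
  iter (p.-1 * (a2 * b1) + a1 * b2) (C e1 e2) z.
Proof.
rewrite CD_l CD_r (CD_r (e1 *+ a1)) !Cmn.
rewrite (iter_id _ _ (Cxx e1)) (iter_id _ _ (Cxx e2)).
by rewrite iterD (eq_iter C21) iter_mul mulnC.
Qed.

Lemma k_triv z : C e1 e2 z = z.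
Proof.
apply: (iter_kill (CCK e2 e1) pp kp _ Hd) => w.
by rewrite -Cgen -fe1 -fe2 C_f.
Qed.

Lemma C_all x y z : C x y z = z.
Proof.
have H1 y' z' : C e1 y' z' = z'.
  have [n1 [n2 ->]] := decomp y'.
  by rewrite CD_r !CMnr (iter_id _ _ (Cxx e1)) (iter_id _ _ k_triv).
have H2 y' z' : C e2 y' z' = z'.
  have [n1 [n2 ->]] := decomp y'.
  rewrite CD_r !CMnr (iter_id _ _ (Cxx e2)); apply: iter_id => w.
  by rewrite C21 (iter_id _ _ k_triv).
have [n1 [n2 ->]] := decomp x.
by rewrite CD_l !CMnl (iter_id _ _ (H1 y)) (iter_id _ _ (H2 y)).
Qed.
End KSec.

Hypothesis Ctriv : forall x y z, C x y z = z.

Lemma Tcomm x y z : T x (T y z) = T y (T x z).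
Proof. by rewrite -{1}(Ctriv x y (T y (T x z))) /C !TK. Qed.

Lemma relT x y z : T x (T (f y) z) = T (aff_op f x y) (T (f x) z).
Proof. by rewrite /T E0invE Erel -E0invE. Qed.

Lemma Ttau x z : T x z = T (tau f x) (T (f x) z).
Proof.
have := relT x 0 z; rewrite (af0 fB) T0 => ->.
by congr T; rewrite /aff_op /tau sub0r (afN fB).
Qed.

Lemma T_add a u z : T (a + u) z = T a (T u z).
Proof.
rewrite -[a](tinvK) ; set x := tinv a.
have := relT x (finv u) (Tinv (f x) z); rewrite finvK (TinvK (f x)).
have -> : aff_op f x (finv u) = tau f x + u.
  rewrite /aff_op fB (finvK u) /tau; bring.
move=> <-; rewrite (Tcomm x) (Ttau x) (TinvK (f x)) Tcomm //.
Qed.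

Lemma E_T x w z : E x (T w z) = T (x + f w) (E0 z).
Proof.
have -> : E x (T w z) = T x (E0 (T w z)) by rewrite /T /E0 /E0inv EK.
by rewrite E0T T_add.
Qed.

Lemma T_fst w z : (T w z).1 = z.1 + tau f w.
Proof. by rewrite /T /E /E0inv /Einv /= /aff_op /tau add0r subr0 fB finvK; bring. Qed.

Lemma cov_trivial : cohomologous_trivial (aff_op f) theta.
Proof.
pose gamma y s := (T (tinv y) (0, s)).2.
pose ginv y s := (Tinv (tinv y) (y, s)).2.
have HT y s : T (tinv y) (0, s) = (y, gamma y s).
  by rewrite /gamma [LHS]surjective_pairing T_fst /= add0r tinvK.
have HTi y s : Tinv (tinv y) (y, s) = (0, ginv y s).
  rewrite /ginv [LHS]surjective_pairing; congr (_, _).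
  have := T_fst (tinv y) (Tinv (tinv y) (y, s)); rewrite TinvK /= tinvK.
  by move=> H; apply: (addIr y); rewrite -H add0r.
exists gamma, ginv; split.
  move=> y; split=> s.
    by rewrite /ginv -HT TK.
  by rewrite /gamma -HTi TinvK.
move=> x y s.
have Ex : E x (y, s) = (aff_op f x y, theta x y s) by [].
have := E_T x (tinv y) (0, ginv y s).
rewrite -{1}HTi TinvK Ex.
have -> : E0 (0, ginv y s) = (0, ginv y s).
  by rewrite /E0 /E /= th0 /aff_op subrr (af0 fB) addr0.
have -> : x + f (tinv y) = tinv (aff_op f x y).
  have Hy : y = tau f (tinv y) by rewrite tinvK.
  rewrite -[LHS]tK; congr tinv; rewrite {2}Hy /aff_op /tau.
  rewrite !(fB, afD fB, afN fB); bring.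
by rewrite HT; case.
Qed.

End Cov.

Section Beta.
Variables (A R : comRingType) (f : A -> A).
Hypothesis fB : forall x y, f (x - y) = f x - f y.
Variable beta : A -> A -> R.
Hypothesis bBl : forall x y z, beta (x - y) z = beta x z - beta y z.
Hypothesis bBr : forall x y z, beta x (y - z) = beta x y - beta x z.
Hypothesis bxx : forall x, beta x x = 0.
Hypothesis bf : forall x y, beta (f x) (f y) = beta x y.

Ltac rring := match goal with |- @eq _ ?a ?b => change (@eq (GRing.ComNzRing.sort R) a b); ring end.

Lemma b0l y : beta 0 y = 0. Proof. by have := bBl 0 0 y; rewrite !subrr. Qed.
Lemma b0r y : beta y 0 = 0. Proof. by have := bBr y 0 0; rewrite !subrr. Qed.
Lemma bNl x y : beta (- x) y = - beta x y. Proof. by rewrite -sub0r bBl b0l sub0r. Qed.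
Lemma bNr x y : beta y (- x) = - beta y x. Proof. by rewrite -sub0r bBr b0r sub0r. Qed.
Lemma bDl x y z : beta (x + y) z = beta x z + beta y z.
Proof. by have := bBl x (- y) z; rewrite opprK => ->; rewrite bNl opprK. Qed.
Lemma bDr x y z : beta x (y + z) = beta x y + beta x z.
Proof. by have := bBr x y (- z); rewrite opprK => ->; rewrite bNr opprK. Qed.
Lemma banti x y : beta y x = - beta x y.
Proof.
have := bxx (x + y); rewrite !(bDl, bDr) !bxx add0r addr0 => H.
by apply/eqP; rewrite -addr_eq0 addrC H.
Qed.

Lemma beta_cocycle : quandle_cocycle (aff_op f) (fun x y (s : R) => s + beta x y).
Proof.
split.
- move=> x y; exists (fun s => s - beta x y) => s; [exact: addrK | exact: subrK].
- move=> x y z s; rewrite /aff_op !(fB, afD fB, afN fB).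
  rewrite !(bBl, bBr, bDl, bDr, bNl, bNr) !bf !bxx.
  rewrite (banti x (f y)) (banti x y) (banti x (f x)); rring.
- by move=> x s; rewrite bxx addr0.
Qed.

Lemma beta_nontriv u v : beta (f u) v + beta u (f v) != beta u v *+ 2 ->
  ~ cohomologous_trivial (aff_op f) (fun x y (s : R) => s + beta x y).
Proof.
move=> Hne [g [gi [Hc Ht]]].
have P1 := Ht (f u) (aff_op f v 0) (0 + beta v 0).
have P2 := Ht (f v) (aff_op f u 0) (0 + beta u 0).
have Q1 := Ht v 0 0. have Q2 := Ht u 0 0.
rewrite Q1 (proj1 (Hc _)) in P1.
rewrite Q2 (proj1 (Hc _)) in P2.
have Hend : aff_op f (f u) (aff_op f v 0) = aff_op f (f v) (aff_op f u 0).
  rewrite /aff_op !(fB, afD fB, afN fB); rewrite !(af0 fB).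
  match goal with |- @eq _ ?a ?b => change (@eq (GRing.ComNzRing.sort A) a b); ring end.
rewrite Hend -P2 in P1.
move: P1; rewrite -Q1 -Q2 !b0r !add0r /aff_op !sub0r (afN fB) !(bDr, bNr) !bf.
move/eqP; rewrite -subr_eq0 => /eqP H.
move/eqP: Hne; apply.
rewrite bNr (banti u (f v)) (banti u v) in H.
apply/eqP; rewrite -subr_eq0; apply/eqP; rewrite -H; rring.
Qed.
End Beta.

Definition Rp (p : nat) : comRingType := ('Z_(p ^ 2) * 'Z_p)%type.

Section Concrete.
Variable p : nat.
Hypothesis pp : prime p.

Lemma p1 : (1 < p)%N. Proof. exact: prime_gt1. Qed.
Lemma p2 : (1 < p ^ 2)%N.
Proof. by rewrite (ltn_trans p1) // -{1}[p]expn1 ltn_exp2l // p1. Qed.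

Lemma charp : (p%:R : 'Z_p) = 0. Proof. exact: pchar_Zp p1. Qed.
Lemma charp2 : ((p ^ 2)%:R : 'Z_(p ^ 2)) = 0. Proof. exact: pchar_Zp p2. Qed.

Lemma valZ m (x : 'Z_m) : val x = nat_of_ord x. Proof. by []. Qed.

Lemma red_nat n : @red p (n%:R : 'Z_(p ^ 2)) = n%:R.
Proof.
rewrite /red valZ val_Zp_nat ?p2 // {2}(divn_eq n (p ^ 2)) natrD natrM natrX charp.
by rewrite expr0n mulr0 add0r.
Qed.

Lemma Zp_nat_val (m : nat) (x : 'Z_m) : x = (val x)%:R.
Proof. by rewrite natr_Zp. Qed.

Lemma redD (x y : 'Z_(p ^ 2)) : @red p (x + y) = red x + red y.
Proof. by rewrite [x]Zp_nat_val [y]Zp_nat_val -natrD !red_nat natrD. Qed.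
Lemma redM (x y : 'Z_(p ^ 2)) : @red p (x * y) = red x * red y.
Proof. by rewrite [x]Zp_nat_val [y]Zp_nat_val -natrM !red_nat natrM. Qed.
Lemma red0 : @red p (0 : 'Z_(p ^ 2)) = 0.
Proof. by rewrite -(mulr0n 1) red_nat. Qed.
Lemma red1 : @red p (1 : 'Z_(p ^ 2)) = 1.
Proof. by rewrite -(mulr1n 1) red_nat. Qed.
Lemma redB (x y : 'Z_(p ^ 2)) : @red p (x - y) = red x - red y.
Proof. by rewrite -{2}(subrK y x) (redD (x - y) y) addrK. Qed.

Lemma pmul_nat n : @pmul p (n%:R : 'Z_p) = (p * n)%:R.
Proof.
rewrite /pmul valZ val_Zp_nat ?p1 // {2}(divn_eq n p) mulnDr natrD.
by rewrite mulnCA mulnn (natrM _ (n %/ p)%N (p ^ 2)) charp2 mulr0 add0r.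
Qed.
Lemma pmulD (x y : 'Z_p) : @pmul p (x + y) = pmul x + pmul y.
Proof. by rewrite [x]Zp_nat_val [y]Zp_nat_val -natrD !pmul_nat mulnDr natrD. Qed.
Lemma pmulB (x y : 'Z_p) : @pmul p (x - y) = pmul x - pmul y.
Proof. by rewrite -{2}(subrK y x) (pmulD (x - y) y) addrK. Qed.
Lemma red_pmul (y : 'Z_p) : @red p (pmul y) = 0.
Proof. by rewrite [y]Zp_nat_val pmul_nat red_nat natrM charp mul0r. Qed.
Lemma pmul0 : @pmul p (0 : 'Z_p) = 0.
Proof. by rewrite -(mulr0n 1) pmul_nat muln0. Qed.
Lemma pmul1 : @pmul p (1 : 'Z_p) = p%:R.
Proof. by rewrite -(mulr1n 1) pmul_nat muln1. Qed.

End Concrete.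

Lemma pairB p (a c : 'Z_(p^2)) (b d : 'Z_p) : ((a, b) - (c, d) : Ap p) = (a - c, b - d).
Proof. by []. Qed.
Lemma pairD p (a c : 'Z_(p^2)) (b d : 'Z_p) : ((a, b) + (c, d) : Ap p) = (a + c, b + d).
Proof. by []. Qed.
Lemma pair0 p : (0 : Ap p) = (0, 0).
Proof. by []. Qed.

Lemma pair_inj {A B : Type} {a c : A} {b d : B} : (a, b) = (c, d) -> a = c /\ b = d.
Proof. by move=> H; split; [exact: (f_equal fst H) | exact: (f_equal snd H)]. Qed.

Section Desc.
Variable p : nat.
Hypothesis pp : prime p.

Lemma desc_fB d (x y : Ap p) : desc_fun d (x - y) = desc_fun d x - desc_fun d y.
Proof.
case: d x y => [b c|b|b c] [x1 x2] [y1 y2]; rewrite /= pairB /=; congr (_, _);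
  rewrite ?(redB pp) ?(pmulB pp); ring.
Qed.

Lemma unit0 (R : unitRingType) (u x : R) : u \is a GRing.unit -> u * x = 0 -> x = 0.
Proof. by move=> U H; apply: (mulrI U); rewrite H mulr0. Qed.

Lemma unit2 b : ~~ (p %| b)%N -> (b%:R : 'Z_(p ^ 2)) \is a GRing.unit.
Proof.
move=> nd; rewrite unitZpE ?(p2 pp) // coprime_pexpl // prime_coprime //.
Qed.
Lemma unit1 b : ~~ (p %| b)%N -> (b%:R : 'Z_p) \is a GRing.unit.
Proof.
move=> nd; rewrite unitZpE ?(p1 pp) // prime_coprime //.
Qed.
Lemma ndvd_small b : (0 < b < p)%N -> ~~ (p %| b)%N.
Proof.
case/andP=> b0 bp; apply/negP => /dvdn_leq => /(_ b0); by rewrite leqNgt bp.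
Qed.
Lemma ndvd_mod b : (b %% p != 0)%N -> ~~ (p %| b)%N.
Proof. by rewrite /dvdn. Qed.

Lemma desc_inj d : valid_desc p d -> injective (@desc_fun p d).
Proof.
move=> vd x y H; apply/eqP; rewrite -subr_eq0; apply/eqP.
have : desc_fun d (x - y) = 0 by rewrite desc_fB H subrr.
clear H.
move: (x - y) => [z1 z2]; rewrite pair0.
case: d vd => [b c|b|b c] /=.
- case=> /andP[b0 _] bm0 _ /andP[c1 cp] /pair_inj[H1 H2].
  have U1 := unit2 (ndvd_mod bm0).
  have U2 : (c%:R : 'Z_p) \is a GRing.unit.
    by apply: unit1; apply: ndvd_small; rewrite (leq_trans _ c1) //= cp.
  by rewrite (unit0 U1 H1) (unit0 U2 H2).
- move=> /andP[b1 bp] /pair_inj[H1 H2].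
  have nd : ~~ (p %| b)%N by apply: ndvd_small; rewrite (leq_trans _ b1) //= bp.
  have z10 := unit0 (unit2 nd) H1.
  move: H2; rewrite z10 (red0 pp) add0r => H2.
  by rewrite (unit0 (unit1 nd) H2).
- move=> [/andP[b0 bp] _] /pair_inj[H1 H2].
  have nd : ~~ (p %| b)%N by apply: ndvd_small; rewrite b0 bp.
  have : red (b%:R * z1 + pmul z2) = 0 by rewrite H1 (red0 pp).
  rewrite (redD pp) (red_pmul pp) addr0 (redM pp) (red_nat pp) => /(unit0 (unit1 nd)) r0.
  move: H2; rewrite r0 mulr0 add0r => /(unit0 (unit1 nd)) z20.
  move: H1; rewrite z20 (pmul0 pp) addr0 => /(unit0 (unit2 nd)) ->.
  done.
Qed.

Definition e1 : Ap p := (1, 0).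
Definition e2 : Ap p := (0, 1).

Lemma decomp (x : Ap p) : exists n1 n2, x = e1 *+ n1 + e2 *+ n2.
Proof.
case: x => x1 x2; exists (nat_of_ord x1), (nat_of_ord x2).
rewrite /e1 /e2 !pairMnE /= pairD !mul0rn addr0 add0r.
by rewrite !natr_Zp.
Qed.

Lemma pe2 : e2 *+ p = 0.
Proof. by rewrite /e2 pairMnE /= mul0rn (charp pp). Qed.

Lemma sq_ne1 b : (1 < b < p)%N -> ((b + 1) %% p != 0)%N -> ((b * b) %% p != 1)%N.
Proof.
move=> /andP[b1 bp] nb; apply/negP => /eqP H.
have : (p %| b * b - 1)%N.
  rewrite -eqn_mod_dvd; last by rewrite muln_gt0 (ltnW b1).
  by rewrite H modn_small // (p1 pp).
have -> : (b * b - 1 = (b - 1) * (b + 1))%N by rewrite mulnBl !mulnDr; lia.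
rewrite Euclid_dvdM // => /orP[].
  by apply/negP; apply: ndvd_small; apply/andP; split; lia.
by rewrite /dvdn (negbTE nb).
Qed.

Ltac fexp := rewrite /e1 /e2 /= !pairMnE pairD /= ?(red1 pp) ?(red0 pp) ?(pmul0 pp) ?(pmul1 pp);
  congr (_, _); ring.

Lemma fD1 b c : desc_fun (AutD b c) e1 = e1 *+ b + e2 *+ 0. Proof. fexp. Qed.
Lemma fD2 b c : desc_fun (AutD b c) e2 = e1 *+ 0 + e2 *+ c. Proof. fexp. Qed.
Lemma fG1 b : desc_fun (AutG b) e1 = e1 *+ b + e2 *+ 1. Proof. fexp. Qed.
Lemma fG2 b : desc_fun (AutG b) e2 = e1 *+ 0 + e2 *+ b. Proof. fexp. Qed.
Lemma fH1 b c : desc_fun (AutH b c) e1 = e1 *+ b + e2 *+ c. Proof. fexp. Qed.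
Lemma fH2 b c : desc_fun (AutH b c) e2 = e1 *+ p + e2 *+ b. Proof. fexp. Qed.

Definition beta (x y : Ap p) : 'Z_p := red x.1 * y.2 - x.2 * red y.1.

Lemma bBl x y z : beta (x - y) z = beta x z - beta y z.
Proof. case: x y z => [x1 x2] [y1 y2] [z1 z2]; rewrite /beta pairB /= (redB pp); ring. Qed.
Lemma bBr x y z : beta x (y - z) = beta x y - beta x z.
Proof. case: x y z => [x1 x2] [y1 y2] [z1 z2]; rewrite /beta pairB /= (redB pp); ring. Qed.
Lemma bxx x : beta x x = 0.
Proof. case: x => [x1 x2]; rewrite /beta /=; ring. Qed.

Lemma Zp_nat0 n : ((n%:R : 'Z_p) == 0) = (p %| n)%N.
Proof. by rewrite -val_eqE /= val_Zp_nat ?(p1 pp). Qed.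
Lemma Zp_natmod n : (n%:R : 'Z_p) = (n %% p)%:R.
Proof. by apply: val_inj; rewrite /= !val_Zp_nat ?(p1 pp) // modn_mod. Qed.

Lemma bfD b c : ((b * c) %% p == 1)%N -> forall x y,
  beta (desc_fun (AutD b c) x) (desc_fun (AutD b c) y) = beta x y.
Proof.
move=> H x y; have Hbc : (b%:R * c%:R : 'Z_p) = 1 by rewrite -natrM Zp_natmod (eqP H).
case: x y => [x1 x2] [y1 y2]; rewrite /beta /= !(redM pp) !(red_nat pp).
have -> : red x1 * y2 - x2 * red y1 = (b%:R * c%:R) * (red x1 * y2 - x2 * red y1) by rewrite Hbc mul1r.
ring.
Qed.

Lemma sq1 b : ((b + 1) %% p == 0)%N -> (b%:R * b%:R : 'Z_p) = 1.
Proof.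
move=> H; have Hb : (b%:R + 1 : 'Z_p) = 0.
  by rewrite -[1]mulr1n -natrD Zp_natmod (eqP H).
have -> : (b%:R : 'Z_p) = -1 by rewrite -(subr0 b%:R) -Hb; ring.
ring.
Qed.

Lemma bfG b : ((b + 1) %% p == 0)%N -> forall x y,
  beta (desc_fun (AutG b) x) (desc_fun (AutG b) y) = beta x y.
Proof.
move=> H x y; have Hbb := sq1 H.
case: x y => [x1 x2] [y1 y2]; rewrite /beta /= !(redM pp) !(red_nat pp).
have -> : red x1 * y2 - x2 * red y1 = (b%:R * b%:R) * (red x1 * y2 - x2 * red y1) by rewrite Hbb mul1r.
ring.
Qed.

Lemma bfH b c : ((b + 1) %% p == 0)%N -> forall x y,
  beta (desc_fun (AutH b c) x) (desc_fun (AutH b c) y) = beta x y.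
Proof.
move=> H x y; have Hbb := sq1 H.
case: x y => [x1 x2] [y1 y2]; rewrite /beta /= !(redD pp) !(red_pmul pp) !(redM pp) !(red_nat pp).
have -> : red x1 * y2 - x2 * red y1 = (b%:R * b%:R) * (red x1 * y2 - x2 * red y1) by rewrite Hbb mul1r.
ring.
Qed.

Lemma bvD b c : beta (desc_fun (AutD b c) e1) e2 + beta e1 (desc_fun (AutD b c) e2) = b%:R + c%:R.
Proof. rewrite /beta /e1 /e2 /= ?(redM pp) ?(red1 pp) ?(red0 pp) ?(red_nat pp); ring. Qed.
Lemma bvG b : beta (desc_fun (AutG b) e1) e2 + beta e1 (desc_fun (AutG b) e2) = b%:R + b%:R.
Proof. rewrite /beta /e1 /e2 /= ?(redM pp) ?(red1 pp) ?(red0 pp) ?(red_nat pp); ring. Qed.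
Lemma bvH b c : beta (desc_fun (AutH b c) e1) e2 + beta e1 (desc_fun (AutH b c) e2) = b%:R + b%:R.
Proof.
rewrite /beta /e1 /e2 /= ?(redD pp) ?(red_pmul pp) ?(redM pp) ?(red1 pp) ?(red0 pp) ?(red_nat pp); ring.
Qed.
Lemma be12 : beta e1 e2 = 1.
Proof. rewrite /beta /e1 /e2 /= (red1 pp) (red0 pp); ring. Qed.

Lemma neD b c : (0 < b)%N -> ((b * c) %% p == 1)%N -> (b %% p != 1)%N ->
  (b%:R + c%:R : 'Z_p) != 1 *+ 2.
Proof.
move=> b0 Hbc Hb1; apply/eqP => H2.
have Hm : (b%:R * c%:R : 'Z_p) = 1 by rewrite -natrM Zp_natmod (eqP Hbc).
have E : (((b - 1) ^ 2)%:R : 'Z_p) = 0.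
  rewrite natrX natrB //.
  have -> : ((b%:R - 1%:R) ^+ 2 : 'Z_p) = b%:R * ((b%:R + c%:R) - 1 *+ 2) + (1 - b%:R * c%:R) by ring.
  by rewrite H2 Hm !subrr mulr0 addr0.
move/eqP: E; rewrite Zp_nat0 Euclid_dvdX // andbT.
rewrite -eqn_mod_dvd // (modn_small (p1 pp)).
by move=> H; move: Hb1; rewrite H.
Qed.

Lemma neGH b : (1 < b < p)%N -> (b%:R + b%:R : 'Z_p) != 1 *+ 2.
Proof.
move=> /andP[b1 bp]; apply/eqP => H2.
have E : ((2 * (b - 1))%:R : 'Z_p) = 0.
  rewrite natrM natrB ?(ltnW b1) //.
  have -> : (2%:R * (b%:R - 1%:R) : 'Z_p) = (b%:R + b%:R) - 1 *+ 2 by ring.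
  by rewrite H2 subrr.
move/eqP: E; rewrite Zp_nat0 Euclid_dvdM // => /orP[].
  by move/dvdn_leq => /(_ isT) ?; lia.
by apply/negP; apply: ndvd_small; apply/andP; split; lia.
Qed.

Lemma H_b_ne1 c tinv : cancel (tau (@desc_fun p (AutH 1 c))) tinv -> False.
Proof.
move=> tK.
pose z : Ap p := ((p%:R : 'Z_(p ^ 2)), 0).
have Hz : tau (@desc_fun p (AutH 1 c)) z = tau (@desc_fun p (AutH 1 c)) 0.
  rewrite /tau /z /= !pairB /= (pmul0 pp) (red_nat pp) (charp pp) (red0 pp).
  congr (_, _); ring.
have := can_inj tK Hz; rewrite /z pair0 => /pair_inj[H _].
move/eqP: H; rewrite -val_eqE /= val_Zp_nat ?(p2 pp) // modn_small.
  by rewrite (negbTE (lt0n_neq0 (prime_gt0 pp))).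
by rewrite -{1}[p]expn1 ltn_exp2l ?(p1 pp).
Qed.

End Desc.

Section Main.
Variable p : nat.
Hypothesis pp : prime p.

Lemma fexp_all d tinv : valid_desc p d -> sc_condition p d ->
  cancel (tau (@desc_fun p d)) tinv ->
  exists a1 a2 b1 b2, [/\ desc_fun d (e1 p) = e1 p *+ a1 + e2 p *+ a2,
     desc_fun d (e2 p) = e1 p *+ b1 + e2 p *+ b2 &
     ((p.-1 * (a2 * b1) + a1 * b2) %% p != 1)%N].
Proof.
case: d => [b c|b|b c] /= vd sc tK.
- exists b, 0%N, 0%N, c; split; [exact: fD1 | exact: fD2 |].
  by rewrite muln0 muln0 add0n.
- exists b, 1%N, 0%N, b; split; [exact: fG1 | exact: fG2 |].
  by rewrite muln0 muln0 add0n; apply: sq_ne1.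
- exists b, c, p, b; split; [exact: fH1 | exact: (fH2 pp) |].
  rewrite mulnA modnMDl; apply: sq_ne1 => //.
  case: vd => /andP[b0 bp] _; rewrite bp andbT ltn_neqAle b0 andbT.
  apply/negP => /eqP b1; subst b; exact: (H_b_ne1 pp tK).
Qed.

Lemma bf_all d tinv : valid_desc p d -> ~ sc_condition p d ->
  cancel (tau (@desc_fun p d)) tinv ->
  (forall x y, @beta p (desc_fun d x) (desc_fun d y) = beta x y) /\
  @beta p (desc_fun d (e1 p)) (e2 p) + beta (e1 p) (desc_fun d (e2 p)) != beta (e1 p) (e2 p) *+ 2.
Proof.
case: d => [b c|b|b c] /= vd nsc tK; move/negP: nsc; rewrite negbK => nsc.
- split; first exact: bfD.
  rewrite (bvD pp) (be12 pp); case: vd => /andP[b0 _] _ Hb1 _; exact: neD.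
- split; first exact: bfG.
  rewrite (bvG pp) (be12 pp); exact: neGH.
- split; first exact: bfH.
  rewrite (bvH pp) (be12 pp); apply: (neGH pp).
  case: vd => /andP[b0 bp] _; rewrite bp andbT ltn_neqAle b0 andbT.
  apply/negP => /eqP b1; subst b; exact: (H_b_ne1 pp tK).
Qed.

End Main.


Unset Implicit Arguments.

Theorem lemma3p17 (p : nat) (d : aut_desc) :
  prime p -> valid_desc p d ->
  qconnected (@aff_op (Ap p) (desc_fun d)) ->
  (simply_connected (@aff_op (Ap p) (desc_fun d)) <-> sc_condition p d).
Proof.
move=> pp vd qc.
have fB := desc_fB pp d.
have finj := desc_inj pp vd.
case: (injF_bij finj) => finv fK finvK.
have Hs (y : Rp p) : exists w, @tau (Rp p) (desc_fun d) w == y.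
  by have [w ->] := conn_tau fB fK finvK qc y; exists w.
pose tinv y := xchoose (Hs y).
have tinvK : cancel tinv (tau (desc_fun d)) by move=> y; exact: (eqP (xchooseP (Hs y))).
case: (injF_bij (can_inj tinvK)) => g gK gK'.
have tK : cancel (tau (desc_fun d)) tinv.
  move=> w; have e : tau (desc_fun d) w = g w by rewrite -{1}[w]gK' tinvK.
  by rewrite e gK'.
split.
- case=> _ Hsc.
  case: (classic (sc_condition p d)) => // nsc; exfalso.
  have [bf hne] := bf_all pp vd nsc tK.
  apply: (beta_nontriv fB (bBl pp) (bBr pp) (@bxx p) bf hne).
  apply: Hsc; exact: (beta_cocycle fB (bBl pp) (bBr pp) (@bxx p) bf).
- move=> sc; split; first exact: qc.
  move=> S theta [bij coc th0].
  have Hb x y : exists h, cancel (theta x y) h /\ cancel h (theta x y).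
    by case: (bij x y) => h h1 h2; exists h.
  pose thinv x y := proj1_sig (constructive_indefinite_description _ (Hb x y)).
  have thK x y : cancel (theta x y) (thinv x y).
    exact: (proj1 (proj2_sig (constructive_indefinite_description _ (Hb x y)))).
  have thinvK x y : cancel (thinv x y) (theta x y).
    exact: (proj2 (proj2_sig (constructive_indefinite_description _ (Hb x y)))).
  have [a1 [a2 [b1 [b2 [fe1 fe2 Hd]]]]] := fexp_all pp vd sc tK.
  apply: (cov_trivial fB fK finvK tK tinvK thK thinvK coc th0).
  exact: (C_all fB fK finvK thK thinvK coc pp (@decomp p) (pe2 pp) fe1 fe2 Hd).
Qed.
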